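(* Let $\Pi$ be a projective plane of order $q^2$ and let $\pi$ be a Baer subplane of $\Pi$. Then for any embedding $\phi$ of the complete bipartite graph $K_{q^2,q^2}$ into $\Pi$, the set of image points $\phi(V(K_{q^2,q^2}))$ contains at most (a) $q^2$ points of $\pi$, if $q>2$; (b) $q^2+1$ points of $\pi$, if $q=2$.
   Context: A finite projective plane of order $Q$ has $Q^2+Q+1$ points and lines, $Q+1$ points on each line and $Q+1$ lines through each point; any two distinct points lie on a unique line and any two lines meet in a unique point. A subplane of $\Pi$ is a set of points and lines of $\Pi$ forming a projective plane under the inherited incidence; a Baer subplane of a plane of order $q^2$ is a subplane of order $q$. An embedding of a simple graph $G=(V,E)$ into $\Pi$ is an injective map $\phi$ from $V$ to the points of $\Pi$ such that the induced map sending an edge $ab$ to the line through $\phi(a),\phi(b)$ is injective on $E$. *)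

(* Defs.v *)
From mathcomp Require Import all_boot.
Set Implicit Arguments.
Unset Strict Implicit.
Unset Printing Implicit Defensive.

Definition proj_plane_on (P L : finType) (inc : P -> L -> bool)
    (Pt : {set P}) (Ln : {set L}) (n : nat) : Prop :=
  [/\ #|Pt| = n ^ 2 + n + 1 /\ #|Ln| = n ^ 2 + n + 1,
      (forall l, l \in Ln -> #|[set p in Pt | inc p l]| = n + 1),
      (forall p, p \in Pt -> #|[set l in Ln | inc p l]| = n + 1),
      (forall p1 p2, p1 \in Pt -> p2 \in Pt -> p1 != p2 ->
          exists! l, [/\ l \in Ln, inc p1 l & inc p2 l]) &
      (forall l1 l2, l1 \in Ln -> l2 \in Ln -> l1 != l2 ->
          exists! p, [/\ p \in Pt, inc p l1 & inc p l2])].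

Definition proj_plane (P L : finType) (inc : P -> L -> bool) (n : nat) : Prop :=
  proj_plane_on inc [set: P] [set: L] n.

Definition subplane (P L : finType) (inc : P -> L -> bool)
    (S : {set P}) (M : {set L}) (n : nat) : Prop :=
  proj_plane_on inc S M n.

Definition baer_subplane (P L : finType) (inc : P -> L -> bool)
    (S : {set P}) (M : {set L}) (q : nat) : Prop :=
  subplane inc S M q.

(* The line through two points (the unique one when the points are distinct). *)
Definition line_through (P L : finType) (inc : P -> L -> bool) (p1 p2 : P)
  : option L := [pick l | inc p1 l && inc p2 l].

(* Embedding of a simple graph (V, adj) into the plane: injective on vertices,
   and the induced map edge ab |-> line through phi a, phi b is injective on
   edges (edges are unordered pairs {a,b}). *)
Definition graph_embedding (V P L : finType) (adj : rel V)
    (inc : P -> L -> bool) (phi : V -> P) : Prop :=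
  injective phi /\
  (forall a b c d, adj a b -> adj c d ->
     line_through inc (phi a) (phi b) = line_through inc (phi c) (phi d) ->
     [set a; b] = [set c; d]).

Definition Kmm_vertex (m : nat) : finType := ('I_m + 'I_m)%type.
Definition Kmm_adj (m : nat) : rel (Kmm_vertex m) :=
  fun x y => match x, y with
             | inl _, inr _ | inr _, inl _ => true
             | _, _ => false
             end.
Arguments Kmm_adj m x y : clear implicits.

(* Main.v *)
Require Import Defs.
From mathcomp Require Import all_boot.
From mathcomp Require Import zify.

Lemma line_in_sub (P L : finType) (inc : P -> L -> bool) n k
    (S : {set P}) (M : {set L}) r b :
  proj_plane inc n -> proj_plane_on inc S M k ->
  r \in S -> b \in S -> r != b ->
  line_through inc r b \in [set Some l | l in [set l in M | inc r l]].
Proof.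
move=> [_ _ _ HP _] [_ _ _ HS _] rS bS rb.
have [l [[lM rl bl] _]] := HS r b rS bS rb.
have [l0 [[_ rl0 bl0] u0]] := HP r b (in_setT r) (in_setT b) rb.
rewrite /line_through.
case: pickP => [l' /andP [rl' bl'] | /(_ l)]; last by rewrite rl bl.
have -> : l' = l.
  by rewrite -(u0 l') ?(u0 l) //; split=> //; exact: in_setT.
by apply/imsetP; exists l => //; rewrite inE lM rl.
Qed.

Arguments line_in_sub {P L inc n k S M r b}.

Theorem lemma4p9 (P L : finType) (inc : P -> L -> bool) (q : nat)
    (S : {set P}) (M : {set L}) :
  2 <= q ->
  proj_plane inc (q ^ 2) ->
  baer_subplane inc S M q ->
  forall phi : Kmm_vertex (q ^ 2) -> P,
    graph_embedding (Kmm_adj (q ^ 2)) inc phi ->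
    (2 < q -> #|S :&: (phi @: setT)| <= q ^ 2) /\
    (q = 2 -> #|S :&: (phi @: setT)| <= q ^ 2 + 1).
Proof.
move=> q2 HP HB phi [phiI Hemb].

pose Xs := [set i : 'I_(q ^ 2) | phi (inl i) \in S].
pose Ys := [set j : 'I_(q ^ 2) | phi (inr j) \in S].
have Hcard : #|S :&: (phi @: setT)| <= #|Xs| + #|Ys|.
  have Hsub : S :&: (phi @: setT) \subset
      phi @: ((@inl 'I_(q ^ 2) 'I_(q ^ 2)) @: Xs :|: (@inr 'I_(q ^ 2) 'I_(q ^ 2)) @: Ys).
    apply/subsetP => p /setIP [pS /imsetP [v _ Ev]]; subst p.
    apply/imsetP; exists v => //.
    case: v pS => [i|j] H; apply/setUP; [left|right]; apply/imsetP;
      [exists i|exists j]; rewrite // inE; exact: H.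
  apply: (leq_trans (subset_leq_card Hsub)).
  apply: (leq_trans (leq_imset_card _ _)).
  rewrite cardsU.
  apply: (leq_trans (leq_subr _ _)).
  by apply: leq_add; apply: leq_imset_card.
have HSp := HB.
have [_ _ Hdeg _ _] := HB.
have [[_ HMc] _ _ _ _] := HB.
have Hy : 0 < #|Xs| -> #|Ys| <= q + 1.
  case/card_gt0P => i; rewrite inE => iS.
  pose g j := line_through inc (phi (inl i)) (phi (inr j)).
  have gI : injective g.
    move=> j1 j2 E.
    have := Hemb (inl i) (inr j1) (inl i) (inr j2) isT isT E.
    move/setP/(_ (inr j1)); rewrite !inE eqxx orbT => /esym /orP [] /eqP //.
    by case.
  rewrite -(card_imset Ys gI).
  rewrite -(Hdeg _ iS) -[X in _ <= X](card_imset _ (@Some_inj _)).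
  apply: subset_leq_card; apply/subsetP => o /imsetP [j]; rewrite inE => jS ->.
  rewrite /g; have rb : phi (inl i) != phi (inr j) by apply/eqP => /phiI.
  have /imsetP [l lT ->] := line_in_sub HP HB iS jS rb.
  by apply/imsetP; exists l => //; move: lT; rewrite inE.
have Hx : 0 < #|Ys| -> #|Xs| <= q + 1.
  case/card_gt0P => j; rewrite inE => jS.
  pose g i := line_through inc (phi (inr j)) (phi (inl i)).
  have gI : injective g.
    move=> j1 j2 E.
    have := Hemb (inr j) (inl j1) (inr j) (inl j2) isT isT E.
    move/setP/(_ (inl j1)); rewrite !inE eqxx orbT => /esym /orP [] /eqP //.
    by case.
  rewrite -(card_imset Xs gI).
  rewrite -(Hdeg _ jS) -[X in _ <= X](card_imset _ (@Some_inj _)).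
  apply: subset_leq_card; apply/subsetP => o /imsetP [i]; rewrite inE => iS ->.
  rewrite /g; have rb : phi (inr j) != phi (inl i) by apply/eqP => /phiI.
  have /imsetP [l lT ->] := line_in_sub HP HB jS iS rb.
  by apply/imsetP; exists l => //; move: lT; rewrite inE.
have Hxy : #|Xs| * #|Ys| <= q ^ 2 + q + 1.
  pose h (p : 'I_(q ^ 2) * 'I_(q ^ 2)) := line_through inc (phi (inl p.1)) (phi (inr p.2)).
  have hI : injective h.
    move=> [i1 j1] [i2 j2] E.
    have := Hemb (inl i1) (inr j1) (inl i2) (inr j2) isT isT E.
    move/setP => E'.
    have := E' (inl i1); rewrite !inE eqxx /= => /esym.
    case/orP => /eqP // [ei].
    have := E' (inr j1); rewrite !inE eqxx orbT /= => /esym.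
    move=> /eqP [ej].
    by rewrite ei ej.
  rewrite -cardsX -(card_imset _ hI) -HMc -[X in _ <= X](card_imset _ (@Some_inj _)).
  apply: subset_leq_card; apply/subsetP => o /imsetP [[i j]].
  rewrite inE /= !inE => /andP [iS jS] ->.
  rewrite /h /=; have rb : phi (inl i) != phi (inr j) by apply/eqP => /phiI.
  have /imsetP [l lT ->] := line_in_sub HP HB iS jS rb.
  by apply/imsetP; exists l => //; move: lT; rewrite inE => /andP [].
have xm : #|Xs| <= q ^ 2 by have := max_card (mem Xs); rewrite card_ord.
have ym : #|Ys| <= q ^ 2 by have := max_card (mem Ys); rewrite card_ord.
move: Hcard Hy Hx Hxy xm ym; move: #|Xs| #|Ys| => x y Hc Hy' Hx' Hxy' xm ym.
split=> Hq; apply: (leq_trans Hc).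
- case: (posnP x) => [->|xp]; first by [].
  case: (posnP y) => [->|yp]; first by rewrite addn0.
  have h3 : 3 * q <= q ^ 2 by rewrite expnS expn1 leq_mul2r Hq orbT.
  have := Hy' xp; have := Hx' yp; lia.
- subst q.
  case: (posnP x) => [->|xp]; first by lia.
  case: (posnP y) => [->|yp]; first by lia.
  have := Hy' xp; have := Hx' yp. nia.
Qed.
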